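(* Let $K$ and $K'$ be two non-degenerate CMIs, with $\mathrm{can}(\mathrm{pur}(K))=(C,\langle\mathbb I_K,\mathbb I_K,P_i,1\le i\le t\rangle)$. Let $K''=R_K^{K'}$ and $\mathrm{can}(\mathrm{pur}(K''))=(C'',\langle\mathbb I_{K''},\mathbb I_{K''},P''_j,1\le j\le r\rangle)$, and let $S=C\cup\bigcup_{i=1}^tP_i$ and $P''=\bigcup_{j=1}^rP''_j$. If $K$ implies $K'$ and $R_K^{K'}\ne(\cdot,\langle\ \rangle)$, then $C\subseteq C''\subseteq S\setminus P''$.
   Context: Setting: $X_1,\dots,X_n$ jointly distributed discrete random variables with $H(X_i)<\infty$; distribution unspecified. $X_\alpha=(X_i,i\in\alpha)$, $X_\emptyset$ constant. A CMI is $K=(C,\langle Q_1,\dots,Q_k\rangle)$, $k\ge0$, $C\subseteq\{1,\dots,n\}$, $\langle\cdot\rangle$ an unordered multiset of subsets; valid (for a given distribution) if $\sum_iH(X_{Q_i}|X_C)-H(X_{Q_1},\dots,X_{Q_k}|X_C)=0$. Empty members may be deleted. Degenerate = valid for every distribution, written $(\cdot,\langle\ \rangle)$. ''$K$ implies $K'$'': for every joint distribution, if $K$ is valid then $K'$ is valid. $\mathrm{pur}(K)=(C,\langle Q_i\setminus C:Q_i\setminus C\ne\emptyset\rangle)$. For pure $K$: $\mathbb I_K$ = indices lying in at least two members of the collection if $k\ge2$, else $\emptyset$; $P_1,\dots,P_t$ the nonempty sets among $Q_i\setminus\mathbb I_K$; $\mathrm{can}(K)=(\cdot,\langle\ \rangle)$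 if $k\le1$, $(C,\langle\mathbb I_K,\mathbb I_K\rangle)$ if $k\ge2,\mathbb I_K\ne\emptyset,t\le1$, $(C,\langle P_1..P_t\rangle)$ if $k\ge2,\mathbb I_K=\emptyset$, $(C,\langle\mathbb I_K,\mathbb I_K,P_1..P_t\rangle)$ if $k\ge2,\mathbb I_K\ne\emptyset,t\ge2$. For general $K$, $\mathbb I_K$ is the repeated-index set of $\mathrm{pur}(K)$; general-form notation omits the copies of $\mathbb I_K$ when empty and uses $t=0$ for $(C,\langle\mathbb I_K,\mathbb I_K\rangle)$. $R_K^{K'}$: with $\mathrm{can}(\mathrm{pur}(K'))=(C',\langle\mathbb I_{K'},\mathbb I_{K'},P'_j,1\le j\le s\rangle)$, $D=\mathbb I_{K'}\setminus\mathbb I_K$ and $T_1,\dots,T_u$ the nonempty sets among $P'_j\setminus\mathbb I_K$: $R_K^{K'}=(\cdot,\langle\ \rangle)$ if $D=\emptyset,u\le1$; $(C'\setminus\mathbb I_K,\langle T_1..T_u\rangle)$ if $D=\emptyset,u\ge2$; $(C'\setminus\mathbb I_K,\langle D,D\rangle)$ if $D\ne\emptyset,u\le1$; $(C'\setminus\mathbb I_K,\langle D,D,T_1..T_u\rangle)$ if $D\ne\emptyset,u\ge2$. *)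

(* Defs.v *)
From HB Require Import structures.
From mathcomp Require Import all_boot all_order all_algebra.
From mathcomp Require Import all_classical all_reals.
From mathcomp Require Import ereal esum exp.
From mathcomp Require Import Rstruct.
From Stdlib Require Rdefinitions.
Notation R := Rdefinitions.R.


Set Implicit Arguments.
Unset Strict Implicit.
Unset Printing Implicit Defensive.
Import Order.TTheory GRing.Theory Num.Theory.

Local Open Scope ring_scope.
Local Open Scope classical_set_scope.

(* Jointly distributed discrete random variables X_1..X_n : WLOG each takes  *)
(* values in nat (any countable alphabet), so a joint distribution is a pmf  *)
(* on outcomes x : {ffun 'I_n -> nat}.                                        *)

Definition outcome (n : nat) := {ffun 'I_n -> nat}.

Definition is_pmf (n : nat) (p : outcome n -> R) : Prop :=
  (forall x, 0 <= p x) /\ (\esum_(x in [set: outcome n]) (p x)%:E = 1%E).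

Definition marg (n : nat) (p : outcome n -> R) (alpha : {set 'I_n})
  (y : outcome n) : R :=
  fine (\esum_(x in [set x : outcome n | forall i, i \in alpha -> x i = y i])
          (p x)%:E).

(* canonical representatives of the values of X_alpha: coordinates outside
   alpha are set to 0 *)
Definition reps (n : nat) (alpha : {set 'I_n}) : set (outcome n) :=
  [set y | forall i, i \notin alpha -> y i = 0%N].

Definition negxlnx (t : R) : R := - (t * ln t).

Definition entropyE (n : nat) (p : outcome n -> R) (alpha : {set 'I_n})
  : \bar R :=
  \esum_(y in reps alpha) (negxlnx (marg p alpha y))%:E.

Definition finite_entropies (n : nat) (p : outcome n -> R) : Prop :=
  forall i : 'I_n, (entropyE p [set i] < +oo)%E.

Definition H (n : nat) (p : outcome n -> R) (alpha : {set 'I_n}) : R :=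
  fine (entropyE p alpha).

Definition condH (n : nat) (p : outcome n -> R) (A C : {set 'I_n}) : R :=
  H p (A :|: C) - H p C.

Definition distribution (n : nat) (p : outcome n -> R) : Prop :=
  is_pmf p /\ finite_entropies p.

Local Close Scope classical_set_scope.
Local Close Scope ring_scope.
Local Open Scope nat_scope.

(* CMIs: K = (C, <Q_1,...,Q_k>); the multiset is represented by a sequence,  *)
(* every definition below being invariant under permutation of it.          *)

Definition CMI (n : nat) : Type := ({set 'I_n} * seq {set 'I_n})%type.

Definition valid (n : nat) (K : CMI n) (p : outcome n -> R) : Prop :=
  (\sum_(Q <- K.2) condH p Q K.1
   - condH p (\bigcup_(Q <- K.2) Q) K.1)%R = 0%R.

Definition cmi_implies (n : nat) (K K' : CMI n) : Prop :=
  forall p, distribution p -> valid K p -> valid K' p.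

Definition degenerate (n : nat) (K : CMI n) : Prop :=
  forall p, distribution p -> valid K p.

Definition pur (n : nat) (K : CMI n) : CMI n :=
  (K.1, [seq Q :\: K.1 | Q <- K.2 & Q :\: K.1 != finset.set0]).

Definition rep_set (n : nat) (K : CMI n) : {set 'I_n} :=
  if (2 <= size K.2)%N
  then [set i : 'I_n | (2 <= count (fun Q : {set 'I_n} => i \in Q) K.2)%N]
  else finset.set0.

Definition IK (n : nat) (K : CMI n) : {set 'I_n} := rep_set (pur K).

Definition Pseq (n : nat) (K : CMI n) : seq {set 'I_n} :=
  [seq Q :\: rep_set K | Q <- K.2 & Q :\: rep_set K != finset.set0].

(* canonical form of a pure CMI; None stands for the degenerate (.,< >) *)
Definition can (n : nat) (K : CMI n) : option (CMI n) :=
  let I := rep_set K in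
  let Ps := Pseq K in
  if (size K.2 <= 1)%N then None
  else if I == finset.set0 then Some (K.1, Ps)
  else if (size Ps <= 1)%N then Some (K.1, [:: I; I])
  else Some (K.1, I :: I :: Ps).

(* Components of can(pur(K)) written in general form
   (C, <I_K, I_K, P_1, ..., P_t>) : the condition set, and the list P_1..P_t
   (t = 0 for the form (C,<I_K,I_K>) and for the degenerate case). *)
Definition canC (n : nat) (K : CMI n) : {set 'I_n} := (pur K).1.

Definition canP (n : nat) (K : CMI n) : seq {set 'I_n} :=
  let K0 := pur K in
  if (size K0.2 <= 1)%N then [::]
  else if (rep_set K0 != finset.set0) && (size (Pseq K0) <= 1)%N then [::]
  else Pseq K0.

(* R_K^{K'}; None stands for (.,< >) *)
Definition RKK (n : nat) (K K' : CMI n) : option (CMI n) :=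
  let IKK := IK K in
  let C' := canC K' in
  let D := IK K' :\: IKK in
  let T := [seq P :\: IKK | P <- canP K' & P :\: IKK != finset.set0] in
  if D == finset.set0 then
    (if (size T <= 1)%N then None else Some (C' :\: IKK, T))
  else if (size T <= 1)%N then Some (C' :\: IKK, [:: D; D])
  else Some (C' :\: IKK, D :: D :: T).

(* Main.v *)
Require Import Defs.
From HB Require Import structures.
From mathcomp Require Import all_boot all_order all_algebra.
From mathcomp Require Import all_classical all_reals.
From mathcomp Require Import ereal esum exp.
From mathcomp Require Import Rstruct.
From Stdlib Require Rdefinitions.

Set Implicit Arguments. Unset Strict Implicit. Unset Printing Implicit Defensive.
Import Order.TTheory GRing.Theory Num.Theory.
Local Open Scope ring_scope.
Local Open Scope classical_set_scope.

Local Open Scope ereal_scope.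
Lemma fsbig_seqE (T : choiceType) (r : seq T) (F : T -> \bar R) : uniq r ->
  \sum_(i <- r) F i = \sum_(i \in [set` r]) F i.
Proof. move=> ur. exact: fsbig_seq. Qed.

Lemma esum_fin (T : choiceType) (I : set T) (a : T -> \bar R) (r : seq T) :
  uniq r -> (forall x, I x -> (0 <= a x)%E) ->
  (forall x, I x -> x \notin r -> a x = 0%E) ->
  \esum_(x in I) a x = (\sum_(x <- r | x \in I) a x)%E.
Proof.
move=> ur a0 az.
rewrite esum_mkcond (esumID [set` r]); last first.
  by move=> x _; case: ifP => // /set_mem /a0.
rewrite [X in (_ + X)%E]esum1 ?adde0; last first.
  move=> x [_ /= xr]; case: ifPn => // /set_mem Ix; apply: az => //.
  by apply/negP.
rewrite setTI esum_fset; last 2 first.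
- exact: finite_seq.
- by move=> x _; case: ifP => // /set_mem /a0.
transitivity (\sum_(i <- r) (if i \in I then a i else 0)).
  by rewrite fsbig_seqE.
by rewrite -big_mkcond.
Qed.

Local Close Scope ereal_scope.

Lemma sum_const_count (T : eqType) (s : seq T) (P : pred T) (c : R) :
  \sum_(x <- s | P x) c = c *+ count P s.
Proof.
elim: s => [|y s IH]; first by rewrite big_nil.
rewrite big_cons /= IH; case: (P y) => //=.
by rewrite mulrS.
Qed.

Lemma sum_count_fiber (T U : eqType) (f : T -> U) (L : seq T) (r : seq U) :
  uniq r ->
  (\sum_(y <- r) count (fun x => f x == y) L)%N = count (fun x => f x \in r) L.
Proof.
elim: r => [|y r IH] /=; first by rewrite big_nil count_pred0.
move=> /andP[yr ur]; rewrite big_cons IH //.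
rewrite -(count_predUI (fun x => f x == y) (fun x => f x \in r)) -[RHS]addn0.
congr (_ + _)%N.
rewrite (@eq_count _ _ pred0) ?count_pred0 // => x /=.
by apply/andP => -[/eqP -> ]; apply/negP.
Qed.

Lemma size_undup_fiber (T U : eqType) (f : T -> U) (L : seq T) (m : nat) :
  (forall x, x \in L -> count (fun x' => f x' == f x) L = m) ->
  (size (undup (map f L)) * m)%N = size L.
Proof.
move=> fib.
have -> : size L = count (fun x => f x \in undup (map f L)) L.
  rewrite -[LHS]count_predT; apply: eq_in_count => x xL /=.
  by rewrite mem_undup; apply/esym/map_f.
rewrite -sum_count_fiber ?undup_uniq //.
rewrite big_seq (eq_bigr (fun=> m)); last first.
  move=> y; rewrite mem_undup => /mapP [x xL ->]; exact: fib.
rewrite -big_seq; elim: (undup _) => [|y r IH]; first by rewrite big_nil.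
by rewrite big_cons -IH mulSn.
Qed.

From mathcomp.algebra_tactics Require Import ring.

Section ListDist.
Variable n : nat.
Variable L : seq (outcome n).
Hypothesis uL : uniq L.
Hypothesis L0 : (0 < size L)%N.

Definition pL (x : outcome n) : R := (x \in L)%:R / (size L)%:R.
Definition proj (al : {set 'I_n}) (x : outcome n) : outcome n :=
  [ffun i => if i \in al then x i else 0%N].

Lemma N_gt0 : 0 < (size L)%:R :> R. Proof. by rewrite ltr0n. Qed.

Lemma pL_ge0 x : 0 <= pL x.
Proof. by rewrite /pL divr_ge0 // ler0n. Qed.

Lemma pL_out x : x \notin L -> pL x = 0.
Proof. by rewrite /pL => /negbTE ->; rewrite mul0r. Qed.

Lemma sum_pL (P : pred (outcome n)) :
  \sum_(x <- L | P x) pL x = (count P L)%:R / (size L)%:R.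
Proof.
rewrite big_seq_cond (eq_bigr (fun=> 1 / (size L)%:R)); last first.
  by move=> x /andP[xL _]; rewrite /pL xL.
rewrite sum_const_count (@eq_in_count _ _ P); last by move=> x /= ->.
by rewrite div1r mulr_natl.
Qed.

Lemma pmf_pL : is_pmf pL.
Proof.
split; first exact: pL_ge0.
rewrite (esum_fin (r := L)) //; last first.
  by move=> x _ xL; rewrite pL_out.
  by move=> x _; rewrite lee_fin pL_ge0.
rewrite sumEFin (eq_bigl xpredT); last by move=> x; rewrite in_setT.
have := sum_pL xpredT; rewrite count_predT => ->.
by rewrite divff // gt_eqF // N_gt0.
Qed.

Lemma marg_pL (al : {set 'I_n}) (y : outcome n) : (forall i, i \notin al -> y i = 0%N) ->
  marg pL al y = (count (fun x => proj al x == y) L)%:R / (size L)%:R.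
Proof.
move=> yr; rewrite /marg (esum_fin (r := L)) //; last 2 first.
  by move=> x _; rewrite lee_fin pL_ge0.
  by move=> x _ xL; rewrite pL_out.
rewrite sumEFin /= sum_pL; congr (_%:R / _); apply: eq_count => x.
apply/idP/idP.
  move/set_mem => H; apply/eqP/ffunP => i; rewrite ffunE.
  by case: ifP => [/H -> //| /negbT /yr ->].
move/eqP => <-; apply/mem_set => i ia; by rewrite ffunE ia.
Qed.

Lemma proj_reps (al : {set 'I_n}) (x : outcome n) : reps al (proj al x).
Proof. by move=> i /negbTE ia; rewrite ffunE ia. Qed.

Lemma entropy_pL (al : {set 'I_n}) (m : nat) :
  (forall x, x \in L -> count (fun x' => proj al x' == proj al x) L = m) ->
  entropyE pL al = (ln (size L)%:R - ln m%:R)%:E.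
Proof.
move=> fib.
have hs := size_undup_fiber fib.
set s := size (undup (map (proj al) L)) in hs.
have mpos : (0 < m)%N by move: L0; rewrite -hs muln_gt0 => /andP[].
rewrite /entropyE (esum_fin (r := undup (map (proj al) L))) ?undup_uniq //; last 2 first.
- move=> y yr; rewrite lee_fin /negxlnx oppr_ge0 marg_pL //.
  apply: mulr_ge0_le0; first by rewrite divr_ge0 // ler0n.
  apply: ln_le0; rewrite ler_pdivrMr ?N_gt0 // mul1r ler_nat; exact: count_size.
- move=> y yr ynot; rewrite marg_pL //.
  rewrite (@eq_in_count _ _ pred0) ?count_pred0 /negxlnx ?mul0r ?oppr0 //.
  move=> x xL /=; apply/negP => /eqP ey; move: ynot; rewrite mem_undup -ey.
  by rewrite map_f.
rewrite big_seq_cond (eq_bigr (fun=> (negxlnx (m%:R / (size L)%:R))%:E)); last first.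
  move=> y /andP[]; rewrite mem_undup => /mapP [x xL ->] _.
  by rewrite marg_pL ?fib //; exact: proj_reps.
rewrite sumEFin sum_const_count.
rewrite (@eq_in_count _ _ predT) ?count_predT; last first.
  move=> y; rewrite mem_undup => /mapP [x xL ->] /=. by rewrite map_f // (mem_set (@proj_reps al x)).
congr (_%:E); rewrite -/s.
have hN : (size L)%:R = s%:R * m%:R :> R by rewrite -natrM hs.
rewrite /negxlnx ln_div ?posrE ?ltr0n //.
rewrite -mulr_natr hN.
have s0 : s%:R != 0 :> R by rewrite pnatr_eq0 -lt0n; move: L0; rewrite -hs muln_gt0 => /andP[].
have m0 : m%:R != 0 :> R by rewrite pnatr_eq0 -lt0n.
field.
by rewrite s0 m0.
Qed.

End ListDist.

Lemma H_pL n (L : seq (outcome n)) (al : {set 'I_n}) m :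
  uniq L -> (0 < size L)%N ->
  (forall x, x \in L -> count (fun x' => proj al x' == proj al x) L = m) ->
  H (pL L) al = ln (size L)%:R - ln m%:R.
Proof. by move=> uL L0 fib; rewrite /H (entropy_pL uL L0 fib). Qed.

Lemma dist_pL n (L : seq (outcome n)) :
  uniq L -> (0 < size L)%N ->
  (forall al : {set 'I_n}, exists m,
     forall x, x \in L -> count (fun x' => proj al x' == proj al x) L = m) ->
  distribution (pL L).
Proof.
move=> uL L0 fib; split; first exact: pmf_pL.
move=> i; have [m hm] := fib [set i]%SET.
by rewrite (entropy_pL uL L0 hm) ltry.
Qed.

Definition ln2 : R := ln 2%:R.
Lemma ln2_neq0 : ln2 != 0.
Proof. by rewrite /ln2 ln_eq0 ?ltr0n // pnatr_eq1. Qed.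

Local Close Scope classical_set_scope.
Section Copy.
Variables (n : nat) (W : {set 'I_n}).
Hypothesis W0 : W != finset.set0.

Definition xb (b : bool) : outcome n := [ffun i => if i \in W then nat_of_bool b else 0%N].
Definition Lcopy := [:: xb false; xb true].

Lemma proj_xb (al : {set 'I_n}) b b' :
  (proj al (xb b) == proj al (xb b')) = (b == b') || (al :&: W == finset.set0).
Proof.
case: (boolP (b == b')) => [/eqP -> |bb]; first by rewrite eqxx.
apply/eqP/idP => /=.
  move=> E; apply/negPn/negP => /set0Pn [i]; rewrite inE => /andP[ia iW].
  move/ffunP: E => /(_ i); rewrite !ffunE ia iW.
  by move: bb; case: b; case: b'.
move=> /eqP E; apply/ffunP => i; rewrite !ffunE.
case: ifP => // ia; have : i \notin W.
  by apply/negP => iW; move/setP: E => /(_ i); rewrite !inE ia iW.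
by move/negbTE => ->.
Qed.

Lemma uniq_Lcopy : uniq Lcopy.
Proof.
rewrite /= andbT inE; apply/negP => /eqP /ffunP.
have [w wW] := set0Pn _ W0.
by move=> /(_ w); rewrite !ffunE wW.
Qed.

Lemma fib_copy (al : {set 'I_n}) x : x \in Lcopy ->
  count (fun x' => proj al x' == proj al x) Lcopy =
  if al :&: W == finset.set0 then 2%N else 1%N.
Proof.
rewrite !inE => /orP [] /eqP ->; rewrite /= !proj_xb /=;
by case: (al :&: W == finset.set0).
Qed.

Lemma dist_copy : distribution (pL Lcopy).
Proof.
apply: dist_pL; [exact: uniq_Lcopy | by [] |].
move=> al; eexists; exact: fib_copy.
Qed.

Lemma H_copy (al : {set 'I_n}) : H (pL Lcopy) al = ln2 * (al :&: W != finset.set0)%:R.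
Proof.
rewrite (H_pL uniq_Lcopy _ (@fib_copy al)) //.
case: (al :&: W == finset.set0) => /=; first by rewrite mulr0 subrr.
by rewrite ln1 subr0 mulr1.
Qed.
End Copy.

Section Xor.
Variables (n : nat) (t1 t2 j : 'I_n).
Hypotheses (h12 : t1 != t2) (h1j : t1 != j) (h2j : t2 != j).

Definition xr (b1 b2 : bool) : outcome n :=
  [ffun i => if i == t1 then nat_of_bool b1 else if i == t2 then nat_of_bool b2
             else if i == j then nat_of_bool (b1 (+) b2) else 0%N].
Definition Lxor := [:: xr false false; xr false true; xr true false; xr true true].

Lemma xr_t1 b1 b2 : xr b1 b2 t1 = b1. Proof. by rewrite ffunE eqxx. Qed.
Lemma xr_t2 b1 b2 : xr b1 b2 t2 = b2.
Proof. by rewrite ffunE eq_sym (negbTE h12) eqxx. Qed.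
Lemma xr_j b1 b2 : xr b1 b2 j = (b1 (+) b2).
Proof. by rewrite ffunE eq_sym (negbTE h1j) eq_sym (negbTE h2j) eqxx. Qed.

Lemma nat_of_bool_inj (a b : bool) : (nat_of_bool a == nat_of_bool b) = (a == b).
Proof. by case: a; case: b. Qed.

Lemma projE (al : {set 'I_n}) (x : outcome n) i :
  proj al x i = if i \in al then x i else 0%N.
Proof. by rewrite ffunE. Qed.

Lemma xr_other b1 b2 i : i != t1 -> i != t2 -> i != j -> xr b1 b2 i = 0%N.
Proof. by move=> /negbTE a /negbTE b /negbTE c; rewrite ffunE a b c. Qed.

Lemma proj_xr (al : {set 'I_n}) b1 b2 c1 c2 :
  (proj al (xr b1 b2) == proj al (xr c1 c2)) =
  [&& (t1 \in al) ==> (b1 == c1), (t2 \in al) ==> (b2 == c2)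
    & (j \in al) ==> (b1 (+) b2 == c1 (+) c2)].
Proof.
apply/eqP/and3P.
  move/ffunP => E; split; apply/implyP => ia.
  - by move: (E t1); rewrite !projE ia !xr_t1 => /eqP; rewrite nat_of_bool_inj.
  - by move: (E t2); rewrite !projE ia !xr_t2 => /eqP; rewrite nat_of_bool_inj.
  - by move: (E j); rewrite !projE ia !xr_j => /eqP; rewrite nat_of_bool_inj.
move=> [/implyP e1 /implyP e2 /implyP e3]; apply/ffunP => i; rewrite !projE.
case: ifP => // ia.
case: (eqVneq i t1) => [Ei | n1]; first by subst i; rewrite !xr_t1 (eqP (e1 ia)).
case: (eqVneq i t2) => [Ei | n2]; first by subst i; rewrite !xr_t2 (eqP (e2 ia)).
case: (eqVneq i j) => [Ei | n3]; first by subst i; rewrite !xr_j (eqP (e3 ia)).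
by rewrite !xr_other.
Qed.

Lemma uniq_Lxor : uniq Lxor.
Proof.
have E : forall b1 b2 c1 c2, (xr b1 b2 == xr c1 c2) = (b1 == c1) && (b2 == c2).
  move=> b1 b2 c1 c2; apply/eqP/andP.
    move/ffunP => E; split.
      by move: (E t1); rewrite !xr_t1 => /eqP; rewrite nat_of_bool_inj.
    by move: (E t2); rewrite !xr_t2 => /eqP; rewrite nat_of_bool_inj.
  by case=> /eqP -> /eqP ->.
by rewrite /= !inE !E.
Qed.

Definition kx (al : {set 'I_n}) : nat := ((t1 \in al) + (t2 \in al) + (j \in al))%N.

Lemma fib_xor (al : {set 'I_n}) x : x \in Lxor ->
  count (fun x' => proj al x' == proj al x) Lxor =
  if kx al == 0%N then 4%N else if kx al == 1%N then 2%N else 1%N.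
Proof.
rewrite /kx !inE => /or4P [] /eqP ->; rewrite /= !proj_xr /=;
by case: (t1 \in al); case: (t2 \in al); case: (j \in al).
Qed.

Lemma dist_xor : distribution (pL Lxor).
Proof.
apply: dist_pL; [exact: uniq_Lxor | by [] |].
move=> al; eexists; exact: fib_xor.
Qed.

Lemma H_xor (al : {set 'I_n}) : H (pL Lxor) al = ln2 * (minn 2 (kx al))%:R.
Proof.
rewrite (H_pL uniq_Lxor _ (@fib_xor al)) //.
have l4 : ln (4%:R : R) = ln2 *+ 2.
  by rewrite -lnXn ?ltr0n // -natrX.
rewrite /= l4.
case: (kx al) => [|[|k]] /=.
- by rewrite l4 mulr0 subrr.
- by rewrite /ln2 mulr1 mulr2n addrK.
- rewrite ln1 subr0 (@minn_idPl 2 k.+2 _) //. by rewrite mulr_natr.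
Qed.
End Xor.

Lemma valid_g n (p : outcome n -> R) (K : CMI n) (g : {set 'I_n} -> nat) :
  (forall al, H p al = ln2 * (g al)%:R) ->
  (forall A, g K.1 <= g (A :|: K.1))%N ->
  valid K p <-> (\sum_(Q <- K.2) (g (Q :|: K.1) - g K.1))%N =
                (g ((\bigcup_(Q <- K.2) Q) :|: K.1) - g K.1)%N.
Proof.
move=> hH mono; rewrite /valid /condH.
have cE : forall A, H p (A :|: K.1) - H p K.1 = ln2 * (g (A :|: K.1) - g K.1)%N%:R.
  by move=> A; rewrite !hH natrB // mulrBr.
rewrite (eq_bigr (fun Q => ln2 * (g (Q :|: K.1) - g K.1)%N%:R)); last first.
  by move=> Q _; exact: cE.
rewrite cE -mulr_sumr -natr_sum -mulrBr.
split.
  by move/eqP; rewrite mulf_eq0 (negbTE ln2_neq0) /= subr_eq0 eqr_nat => /eqP.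
by move=> ->; rewrite subrr mulr0.
Qed.

Lemma sum_bool_count (T : Type) (s : seq T) (P : pred T) :
  (\sum_(x <- s) (P x : nat))%N = count P s.
Proof. by elim: s => [|x s IH]; rewrite ?big_nil ?big_cons ?IH. Qed.

Lemma mem_bigcup_seq n (s : seq {set 'I_n}) x :
  (x \in \bigcup_(Q <- s) Q) = has (fun Q : {set 'I_n} => x \in Q) s.
Proof.
elim: s => [|Q s IH]; first by rewrite big_nil inE.
by rewrite big_cons inE IH.
Qed.

Lemma meet_bigcup_seq n (s : seq {set 'I_n}) W :
  ((\bigcup_(Q <- s) Q) :&: W != finset.set0) = has (fun Q => Q :&: W != finset.set0) s.
Proof.
elim: s => [|Q s IH]; first by rewrite big_nil finset.set0I eqxx.
by rewrite big_cons finset.setIUl finset.setU_eq0 negb_and IH.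
Qed.

Lemma count_le1_has (T : Type) (a : pred T) s :
  (count a s == has a s :> nat) = (count a s <= 1)%N.
Proof. by rewrite has_count; case: (count a s) => [|[|k]]. Qed.

Lemma copy_valid_C n (W : {set 'I_n}) (W0 : W != finset.set0) (K : CMI n) :
  K.1 :&: W != finset.set0 -> valid K (pL (Lcopy W)).
Proof.
move=> CW; apply/(valid_g (g := fun al => (al :&: W != finset.set0) : nat)).
- exact: H_copy.
- by move=> A /=; rewrite CW finset.setIUl finset.setU_eq0 negb_and CW orbT.
rewrite /= CW finset.setIUl finset.setU_eq0 negb_and CW orbT /= subnn.
by rewrite big1_seq // => Q _; rewrite finset.setIUl finset.setU_eq0 negb_and CW orbT.
Qed.

Lemma copy_validE n (W : {set 'I_n}) (W0 : W != finset.set0) (K : CMI n) :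
  K.1 :&: W == finset.set0 ->
  valid K (pL (Lcopy W)) <-> (count (fun Q => Q :&: W != finset.set0) K.2 <= 1)%N.
Proof.
move=> /eqP CW; rewrite (valid_g (g := fun al => (al :&: W != finset.set0) : nat)).
- rewrite CW eqxx /=.
  under eq_bigr do rewrite subn0 finset.setIUl CW finset.setU0.
  rewrite subn0 finset.setIUl CW finset.setU0 sum_bool_count meet_bigcup_seq -count_le1_has.
  by split => [-> | /eqP].
- exact: H_copy.
- by move=> A; rewrite CW eqxx.
Qed.

Section XorValid.
Variables (n : nat) (t1 t2 j : 'I_n).
Hypotheses (h12 : t1 != t2) (h1j : t1 != j) (h2j : t2 != j).

Let kx := kx t1 t2 j.
Let p := pL (Lxor t1 t2 j).

Lemma kxE (A : {set 'I_n}) : kx A = ((t1 \in A) + (t2 \in A) + (j \in A))%N.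
Proof. by []. Qed.

Lemma xor_invalid (K : CMI n) :
  t1 \notin K.1 -> t2 \notin K.1 -> j \in K.1 ->
  (2 <= count (fun Q : {set 'I_n} => (t1 \in Q) || (t2 \in Q)) K.2)%N ->
  ~ valid K p.
Proof.
move=> n1 n2 jC c2.
rewrite (valid_g (g := fun al => minn 2 (kx al))); last 2 first.
- exact: H_xor.
- by move=> A /=; rewrite !kxE !inE (negbTE n1) (negbTE n2) jC !orbT /=;
    case: (t1 \in A); case: (t2 \in A).
rewrite /= !kxE !inE (negbTE n1) (negbTE n2) jC !orbT /= !orbF.
rewrite (eq_bigr (fun Q : {set 'I_n} => ((t1 \in Q) || (t2 \in Q)) : nat)); last first.
  by move=> Q _; rewrite kxE !inE (negbTE n1) (negbTE n2) jC !orbT !orbF; case: (t1 \in Q); case: (t2 \in Q).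
rewrite sum_bool_count => E.
have : (count (fun Q : {set 'I_n} => (t1 \in Q) || (t2 \in Q)) K.2 <= 1)%N.
  rewrite E; case: (_ \in _); case: (_ \in _) => //.
by rewrite leqNgt c2.
Qed.

Lemma xor_validA (K : CMI n) :
  t1 \notin K.1 -> t2 \notin K.1 -> j \notin K.1 ->
  (count (fun Q : {set 'I_n} => [|| t1 \in Q, t2 \in Q | j \in Q]) K.2 <= 1)%N ->
  valid K p.
Proof.
move=> n1 n2 n3 c1.
apply/(valid_g (g := fun al => minn 2 (kx al))).
- exact: H_xor.
- by move=> A /=; rewrite !kxE !inE (negbTE n1) (negbTE n2) (negbTE n3).
rewrite /= !kxE !inE (negbTE n1) (negbTE n2) (negbTE n3) /= !orbF.
rewrite (eq_bigr (fun Q : {set 'I_n} => minn 2 ((t1 \in Q) + (t2 \in Q) + (j \in Q)))); last first.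
  by move=> Q _; rewrite kxE !inE (negbTE n1) (negbTE n2) (negbTE n3) !orbF subn0.
rewrite subn0 !mem_bigcup_seq.
elim: K.2 c1 => [|Q s IH] /=; first by rewrite big_nil.
rewrite big_cons.
case: (boolP [|| t1 \in Q, t2 \in Q | j \in Q]) => /= hQ.
  rewrite add1n ltnS leqn0 => /eqP c0.
  have hs : forall Q', Q' \in s -> [|| t1 \in Q', t2 \in Q' | j \in Q'] = false.
    move=> Q' Q's; apply/negbTE; move: c0 => /eqP; rewrite -leqn0 leqNgt -has_count.
    by move/hasPn => /(_ Q' Q's).
  rewrite big1_seq; last first.
    by move=> Q' /andP[_ /hs]; case: (t1 \in Q'); case: (t2 \in Q'); case: (j \in Q').
  have hn : forall Q', Q' \in s -> [/\ t1 \notin Q', t2 \notin Q' & j \notin Q'].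
    by move=> Q' /hs /negbT; rewrite !negb_or => /and3P.
  have -> : has (fun Q' : {set 'I_n} => t1 \in Q') s = false.
    by apply/negbTE/hasPn => Q' /hn [].
  have -> : has (fun Q' : {set 'I_n} => t2 \in Q') s = false.
    by apply/negbTE/hasPn => Q' /hn [].
  have -> : has (fun Q' : {set 'I_n} => j \in Q') s = false.
    by apply/negbTE/hasPn => Q' /hn [].
  by rewrite !orbF addn0.
move: hQ; rewrite !negb_or => /and3P [/negbTE -> /negbTE -> /negbTE ->] /= c1.
by rewrite IH.
Qed.

Lemma xor_validB (K : CMI n) :
  t1 \notin K.1 -> t2 \notin K.1 -> j \notin K.1 ->
  ~~ has (fun Q : {set 'I_n} => j \in Q) K.2 ->
  (count (fun Q : {set 'I_n} => t1 \in Q) K.2 <= 1)%N ->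
  (count (fun Q : {set 'I_n} => t2 \in Q) K.2 <= 1)%N ->
  valid K p.
Proof.
move=> n1 n2 n3 hj c1 c2.
apply/(valid_g (g := fun al => minn 2 (kx al))).
- exact: H_xor.
- by move=> A /=; rewrite !kxE !inE (negbTE n1) (negbTE n2) (negbTE n3).
rewrite /= !kxE !inE (negbTE n1) (negbTE n2) (negbTE n3) /= !orbF.
rewrite subn0 !mem_bigcup_seq (negbTE hj) addn0.
rewrite big_seq (eq_bigr (fun Q : {set 'I_n} => ((t1 \in Q) : nat) + (t2 \in Q)))%N; last first.
  move=> Q QK; rewrite kxE !inE (negbTE n1) (negbTE n2) (negbTE n3) !orbF subn0.
  have -> : (j \in Q) = false.
    by apply/negbTE; move/hasPn: hj => /(_ Q QK).
  by rewrite addn0; case: (t1 \in Q); case: (t2 \in Q).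
rewrite -big_seq big_split /= !sum_bool_count.
move: c1 c2; rewrite -!count_le1_has => /eqP -> /eqP ->.
by case: (has _ _); case: (has _ _).
Qed.
End XorValid.

Section Comb.
Variable n : nat.

Definition fm (B : {set 'I_n}) (s : seq {set 'I_n}) :=
  [seq Q :\: B | Q <- s & Q :\: B != finset.set0].

Lemma pur2 (K : CMI n) : (pur K).2 = fm K.1 K.2. Proof. by []. Qed.
Lemma PseqE (K : CMI n) : Pseq K = fm (rep_set K) K.2. Proof. by []. Qed.

Lemma fm_cons (B : {set 'I_n}) Q s :
  fm B (Q :: s) = if Q :\: B != finset.set0 then (Q :\: B) :: fm B s else fm B s.
Proof. by rewrite /fm /=; case: ifP. Qed.

Lemma count_fm (a : pred {set 'I_n}) (B : {set 'I_n}) (s : seq {set 'I_n}) :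
  (forall Q, a (Q :\: B) = a Q) -> a finset.set0 = false ->
  count a (fm B s) = count a s.
Proof.
move=> aB a0; elim: s => [|Q s IH] //; rewrite fm_cons.
case: ifP => [_ | /negbFE/eqP e] /=; rewrite IH ?aB //.
by rewrite -aB e a0.
Qed.

Lemma count_fm_mem (z : 'I_n) (B : {set 'I_n}) (s : seq {set 'I_n}) : z \notin B ->
  count (fun Q : {set 'I_n} => z \in Q) (fm B s) = count (fun Q : {set 'I_n} => z \in Q) s.
Proof.
move=> zB; apply: count_fm => [Q|]; first by rewrite finset.in_setD zB.
by rewrite inE.
Qed.

Lemma fm_notin (z : 'I_n) (B : {set 'I_n}) (s : seq {set 'I_n}) : z \in B ->
  count (fun Q : {set 'I_n} => z \in Q) (fm B s) = 0%N.
Proof.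
move=> zB; apply/eqP; rewrite -leqn0 leqNgt -has_count; apply/hasPn => Q.
by move=> /mapP [Q' _ ->]; rewrite finset.in_setD zB.
Qed.

Lemma rep_set_le1 (K : CMI n) z : z \notin rep_set K ->
  (count (fun Q : {set 'I_n} => z \in Q) K.2 <= 1)%N.
Proof.
rewrite /rep_set; case: ifP => hs.
  by rewrite inE -ltnNge ltnS.
move=> _; apply: leq_trans (count_size _ _) _.
by rewrite leqNgt hs.
Qed.

Lemma rep_set_ge2 (K : CMI n) z : z \in rep_set K ->
  (2 <= count (fun Q : {set 'I_n} => z \in Q) K.2)%N.
Proof. by rewrite /rep_set; case: ifP => _; rewrite inE. Qed.

Lemma in_rep_set (K : CMI n) z :
  (2 <= count (fun Q : {set 'I_n} => z \in Q) K.2)%N -> z \in rep_set K.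
Proof.
move=> h; rewrite /rep_set ifT ?inE //.
exact: leq_trans h (count_size _ _).
Qed.

Lemma fm_fm (A B : {set 'I_n}) (s : seq {set 'I_n}) : fm B (fm A s) = fm (A :|: B) s.
Proof.
elim: s => [|Q s IH] //; rewrite !fm_cons.
case: (boolP (Q :\: A != finset.set0)) => hA.
  by rewrite fm_cons finset.setDDl IH.
by rewrite IH -finset.setDDl (eqP (negbNE hA)) finset.set0D eqxx.
Qed.

Lemma fm2 (B : {set 'I_n}) (s : seq {set 'I_n}) : (2 <= size (fm B s))%N ->
  exists t1 t2, [/\ t1 \notin B, t2 \notin B &
    (2 <= count (fun Q : {set 'I_n} => (t1 \in Q) || (t2 \in Q)) s)%N].
Proof.
rewrite /fm size_map.
set P := (fun Q : {set 'I_n} => Q :\: B != finset.set0).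
move=> hs.
have hc : forall a, (count a (seq.filter P s) <= count a s)%N.
  by move=> a; rewrite count_filter; apply: sub_count => Q /andP[].
have hin : forall Q, Q \in seq.filter P s -> P Q by move=> Q; rewrite mem_filter => /andP[].
case E: (seq.filter P s) hs hin hc => [|Qa [|Qb r]] // _ hin hc.
have /set0Pn [t1] := hin Qa (mem_head _ _); rewrite finset.in_setD => /andP [t1B t1Q].
have /set0Pn [t2] : P Qb by apply: hin; rewrite !inE eqxx orbT.
rewrite finset.in_setD => /andP [t2B t2Q].
exists t1, t2; split => //.
apply: leq_trans (hc _); rewrite /= t1Q t2Q orbT.
by [].
Qed.

Lemma canP_cases (X : CMI n) : canP X = [::] \/ canP X = Pseq (pur X).
Proof. by rewrite /canP; case: ifP => _; [left | case: ifP => _; [left | right]]. Qed.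

Lemma canP_avoid (X : CMI n) x :
  x \in \bigcup_(P <- canP X) P -> x \notin X.1.
Proof.
rewrite mem_bigcup_seq; case: (canP_cases X) => ->; first by [].
move=> /hasP [P /mapP [Q' + ->]]; rewrite mem_filter => /andP [_ /mapP [Q _ ->]].
by rewrite !finset.in_setD => /and3P [].
Qed.

Lemma meet1 (Q : {set 'I_n}) d : (Q :&: [set d] != finset.set0) = (d \in Q).
Proof.
apply/set0Pn/idP => [[i]|dQ]; first by rewrite !inE => /andP [iQ /eqP <-].
by exists d; rewrite !inE dQ eqxx.
Qed.

Lemma meetW (Q W : {set 'I_n}) x : x \in Q -> x \in W -> Q :&: W != finset.set0.
Proof. by move=> xQ xW; apply/set0Pn; exists x; rewrite inE xQ xW. Qed.

End Comb.

Lemma D_empty n (K K' : CMI n) : cmi_implies K K' -> IK K' :\: IK K = finset.set0.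
Proof.
move=> imp; apply/eqP/set0Pn => -[d]; rewrite finset.in_setD => /andP [dI dI'].
have W0 : [set d] != finset.set0 :> {set 'I_n}.
  by apply/set0Pn; exists d; rewrite inE.
have cK' := rep_set_ge2 dI'.
have dC' : d \notin K'.1.
  by apply/negP => dC; move: cK'; rewrite pur2 fm_notin.
have hK : valid K (pL (Lcopy [set d])).
  case: (boolP (d \in K.1)) => dC.
    by apply: copy_valid_C => //; apply: (meetW dC); rewrite inE.
  apply/copy_validE => //.
    by rewrite -[_ == _]negbK meet1.
  by rewrite (eq_count (fun Q => meet1 Q d)) -(count_fm_mem _ dC) -pur2 rep_set_le1.
have hC'W : K'.1 :&: [set d] == finset.set0 by rewrite -[_ == _]negbK meet1.
move: (imp _ (dist_copy W0) hK) => /(copy_validE W0 hC'W).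
by rewrite (eq_count (fun Q => meet1 Q d)) -(count_fm_mem _ dC') -pur2 leqNgt cK'.
Qed.

Lemma count_fm3 n (t1 t2 x : 'I_n) (B : {set 'I_n}) s :
  t1 \notin B -> t2 \notin B -> x \notin B ->
  count (fun Q : {set 'I_n} => [|| t1 \in Q, t2 \in Q | x \in Q]) (fm B s) =
  count (fun Q : {set 'I_n} => [|| t1 \in Q, t2 \in Q | x \in Q]) s.
Proof.
move=> a b c; apply: count_fm => [Q|]; first by rewrite !finset.in_setD a b c.
by rewrite !inE.
Qed.

Theorem mainTheorem9 (n : nat) (K K' : CMI n) :
  ~ degenerate K -> ~ degenerate K' ->
  cmi_implies K K' ->
  forall K'' : CMI n, RKK K K' = Some K'' ->
  let C := canC K in
  let S := C :|: \bigcup_(P <- canP K) P in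
  let C'' := canC K'' in
  let P'' := \bigcup_(P <- canP K'') P in
  C \subset C'' /\ C'' \subset S :\: P''.
Proof.
move=> _ _ imp K'' hR C S C'' P''.
have hD := D_empty imp.
have hR' : RKK K K' = if (size (fm (IK K) (canP K')) <= 1)%N then None
                     else Some (K'.1 :\: IK K, fm (IK K) (canP K')).
  by rewrite /RKK; cbv zeta; rewrite hD eqxx.
rewrite hR' in hR; case: ifP hR => // hT [eK''].
have hT2 : (2 <= size (fm (IK K) (canP K')))%N by rewrite ltnNge hT.
case: (canP_cases K') => hc; first by rewrite hc in hT2.
rewrite hc PseqE pur2 !fm_fm in hT2.
have [t1 [t2 [nt1 nt2 ct]]] := fm2 hT2.
move: nt1 nt2; rewrite !finset.in_setU !negb_or  => /and3P[t1C' t1I' t1I] /and3P[t2C' t2I' t2I].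
have h12 : t1 != t2.
  apply/negP => /eqP e; subst t2.
  rewrite (@eq_count _ (fun Q : {set 'I_n} => (t1 \in Q) || (t1 \in Q)) (fun Q => t1 \in Q)) in ct; last first.
    by move=> Q; rewrite orbb.
  move/negP: t1I'; apply; apply: in_rep_set.
  by rewrite pur2 count_fm_mem.
have part1 : forall c, c \in K.1 -> c \in K'.1.
  move=> c cC; apply/negPn/negP => cC'.
  pose W : {set 'I_n} := [set c; t1; t2].
  have W0 : W != finset.set0 by apply/set0Pn; exists c; rewrite !inE eqxx.
  have hK : valid K (pL (Lcopy W)).
    by apply: copy_valid_C => //; apply: (meetW cC); rewrite !inE eqxx.
  have hC'W : K'.1 :&: W == finset.set0.
    rewrite -[_ == _]negbK; apply/negP => /set0Pn [i]; rewrite !inE.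
    by case/andP => iC /orP [/orP [] |] /eqP ei; subst i; rewrite ?(negbTE cC') ?(negbTE t1C') ?(negbTE t2C') in iC.
  move: (imp _ (dist_copy W0) hK) => /(copy_validE W0 hC'W).
  rewrite leqNgt; apply/negP/negPn; apply: leq_trans ct _.
  by apply: sub_count => Q /orP [] tQ; apply: (meetW tQ); rewrite !inE eqxx ?orbT.
subst K''; rewrite /P'' /S /C'' /C /canC /=; split.
  apply/fintype.subsetP => c cC; rewrite finset.in_setD part1 // andbT.
  by apply/negP => /rep_set_ge2; rewrite pur2 fm_notin.
apply/fintype.subsetP => x; rewrite finset.in_setD => /andP [xI xC'].
rewrite finset.in_setD; apply/andP; split.
  by apply/negP => /canP_avoid /=; rewrite finset.in_setD xI xC'.
rewrite finset.in_setU; case: (boolP (x \in K.1)) => //= xC.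
apply/negPn/negP => xP.
have h1j : t1 != x by apply: contraNneq t1C' => ->.
have h2j : t2 != x by apply: contraNneq t2C' => ->.
have t1C : t1 \notin K.1 by apply: contra t1C'; exact: part1.
have t2C : t2 \notin K.1 by apply: contra t2C'; exact: part1.
have hK : valid K (pL (Lxor t1 t2 x)).
  move: xP; rewrite /canP; case: ifP => h1.
    move=> _; apply: xor_validA => //.
    rewrite -(count_fm3 _ t1C t2C xC) -pur2.
    exact: leq_trans (count_size _ _) h1.
  case: ifP => h2.
    move=> _; apply: xor_validA => //.
    rewrite -(count_fm3 _ t1C t2C xC) -pur2 -(count_fm3 _ t1I t2I xI) -PseqE.
    apply: leq_trans (count_size _ _) _.
    by case/andP: h2.
  move=> xP; apply: xor_validB => //.
  - rewrite has_count -(count_fm_mem _ xC) -pur2 -(count_fm_mem _ xI) -PseqE.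
    by rewrite -has_count -mem_bigcup_seq.
  - by rewrite -(count_fm_mem _ t1C) -pur2; apply: rep_set_le1.
  - by rewrite -(count_fm_mem _ t2C) -pur2; apply: rep_set_le1.
have := imp _ (dist_xor h12 h1j h2j) hK.
exact: xor_invalid.
Qed.
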